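(* Let $F = F^{\times} \times \mathcal F(P)$ be a factorial monoid and $H \subset F$ a seminormal C-monoid with $H^{\times} = H \cap F^{\times}$ which is dense in $F$. Write $\mathcal C = \mathcal C(H,F)$, $\mathcal C^* = \mathcal C^*(H,F)$, and let the set of idempotents be $\mathsf E(\mathcal C) = \mathsf E(\mathcal C^* ) = \{e_0, e_1, \ldots, e_n\}$ (distinct), where $n \in \mathbb N$, $e_0 = [1]$ and $e_0 + \ldots + e_n = e_n$. For $i \in [0,n]$ let $\mathcal C_i = \mathcal C_{e_i}$ and $\mathcal C_i^* = \mathcal C^*_{e_i}$ be the constituent groups of $e_i$ in $\mathcal C$ resp. $\mathcal C^*$. Let $\mathcal C_H = \{[y] \mid y \in H\}$ and $\mathcal C_{F^{\times}}(H,F) = \{[\epsilon] \mid \epsilon \in F^{\times}\}$. Suppose that every class of $\mathcal C^*$ contains an element of $P$. For every $i \in [0,n]$ let $P_i = \{p \in P \mid [p] \in \mathcal C_i^*\}$, $F_i = F^{\times} \times \mathcal F(P_i)$, $H_i = F_i \cap H$, and let $\varphi_i \colon \mathcal C_{F^{\times}}(H,F) \to \mathcal C_i^*$ be defined by $\varphi_i([\epsilon]) = [\epsilon] + e_i$. Then for every $k \in [0,n]$, $H_k \subset F_k$ is a seminormal C-monoid and: (1) If $e_k \notin \mathcal C_H$, then $H_k = H^{\times}$. If $e_k \in \mathcal C_H$, then $\mathcal C(H_k,F_k) \cong \mathcal C_k$ if $\varphi_k$ is injective, and $\mathcal C(H_k,F_k) \cong \mathcal C_{F^{\times}}(H,F)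 \cup \mathcal C_k$ (a subsemigroup of $\mathcal C$) if $\varphi_k$ is not injective. In particular, $\mathcal C(H_0,F_0) \cong \mathcal C_0$, and if $\mathcal C(H_k,F_k)$ is a group, then $H_k$ is a Krull monoid. (2) If $e_k \in \mathcal C_H$, then there is a transfer homomorphism $\theta_k \colon H_k \to \mathcal B\big(\mathcal C_k^*/\varphi_k(\mathcal C_{F^{\times}}(H,F))\big)$.
   Context: All semigroups are commutative with identity; a monoid is a cancellative such semigroup; $H^{\times}$ is the unit group, $\mathsf q(H)$ the quotient group, and $[a,b]$ denotes the set of integers between $a$ and $b$. A factorial monoid is $F = F^{\times} \times \mathcal F(P)$ with $\mathcal F(P)$ the free abelian monoid on the set $P$ of primes; $\mathsf v_p$ is the $p$-adic exponent. For a submonoid $H \subset F$, $y \sim y'$ ($H$-equivalence) if for all $x \in F$: $xy \in H \iff xy' \in H$; $[y]$ is the class of $y$; $\mathcal C(H,F) = \{[y] \mid y \in F\}$ is the class semigroup (additive, identity $[1]$), $\mathcal C^*(H,F) = \{[y] \mid y \in (F\setminus F^{\times}) \cup \{1\}\}$ the reduced class semigroup. $H$ is a C-monoid (in $F$) if $H^{\times} = H \cap F^{\times}$ and $\mathcal C^*(H,F)$ is finite; $H$ is dense in $F$ if $\mathsf v_p(H)$ is a numerical monoid for every $p \in P$. $H$ is seminormal if every $x \in \mathsf q(H)$ with $x^n \in H$ for all sufficiently large $n$ lies in $H$. A Krull monoid is a completely integrally closed monoid satisfying the ACC on divisorial ideals. For an idempotent $e$ of a commutative semigroup $\mathcal C$,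 the constituent group is $\mathcal C_e = \{x \in \mathcal C \mid x+e = x \text{ and } x+y = e \text{ for some } y \in \mathcal C\}$. For a finite abelian group $G$, $\mathcal B(G)$ is the monoid of all sequences (elements of the free abelian monoid $\mathcal F(G)$) whose terms sum to $0$. A monoid homomorphism $\theta \colon H \to B$ is a transfer homomorphism if (T1) $B = \theta(H)B^{\times}$ and $\theta^{-1}(B^{\times}) = H^{\times}$, and (T2) whenever $u \in H$, $b,c \in B$ and $\theta(u) = bc$, there exist $v,w \in H$ with $u = vw$, $\theta(v)B^{\times} = bB^{\times}$ and $\theta(w)B^{\times} = cB^{\times}$. *)

(* Defs.v *)
From HB Require Import structures.
From mathcomp Require Import all_boot all_order all_algebra.
From mathcomp Require Import finmap multiset.
From Stdlib Require List.
Set Implicit Arguments. Unset Strict Implicit. Unset Printing Implicit Defensive.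
Import GRing.Theory.
Local Open Scope mset_scope.

(* The factorial monoid  F = F^x * F(P).  F^x is an (additively written)     *)
(* abelian group V, F(P) is the free abelian monoid {mset P} on P.           *)
(* A "monoid" inside F is a predicate on the carrier type FF V P.            *)
Section Factorial.
Variables (V : zmodType) (P : choiceType).

Definition FF : Type := (V * multiset P)%type.

Definition fmul (x y : FF) : FF := ((x.1 + y.1)%R, msetD x.2 y.2).
Definition fone : FF := (0%R, mset0).
Definition fexp (x : FF) (n : nat) : FF := iter n (fmul x) fone.

Definition prime_el (p : P) : FF := (0%R, [mset p]).

Definition vp (p : P) (x : FF) : nat := x.2 p.

Definition Fall : FF -> Prop := fun _ => True.

Definition Fsub (Q : P -> Prop) : FF -> Prop :=
  fun x => forall p, (0 < x.2 p)%N -> Q p.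

Definition unitIn (M : FF -> Prop) (x : FF) : Prop :=
  M x /\ exists y, M y /\ fmul x y = fone.

Definition submonoid (Fk H : FF -> Prop) : Prop :=
  (forall x, H x -> Fk x) /\ H fone /\ (forall x y, H x -> H y -> H (fmul x y)).

Definition finite_set (T : Type) (S : T -> Prop) : Prop :=
  exists s : seq T, forall x, S x -> List.In x s.

Definition Hequiv (Fk H : FF -> Prop) (y y' : FF) : Prop :=
  forall x, Fk x -> (H (fmul x y) <-> H (fmul x y')).

Definition cls (Fk H : FF -> Prop) (y : FF) : FF -> Prop :=
  fun z => Fk z /\ Hequiv Fk H y z.

Definition classes (Fk H : FF -> Prop) : (FF -> Prop) -> Prop :=
  fun c => exists y, Fk y /\ c = cls Fk H y.

Definition red_classes (Fk H : FF -> Prop) : (FF -> Prop) -> Prop :=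
  fun c => exists y, ((Fk y /\ ~ unitIn Fk y) \/ y = fone) /\ c = cls Fk H y.

Definition cadd (Fk H : FF -> Prop) (A B : FF -> Prop) : FF -> Prop :=
  fun z => exists a b, A a /\ B b /\ cls Fk H (fmul a b) z.

Definition constituent (Fk H : FF -> Prop) (S : (FF -> Prop) -> Prop)
    (e : FF -> Prop) : (FF -> Prop) -> Prop :=
  fun x => S x /\ cadd Fk H x e = x /\ exists y, S y /\ cadd Fk H x y = e.

Definition classes_H (Fk H : FF -> Prop) : (FF -> Prop) -> Prop :=
  fun c => exists y, H y /\ c = cls Fk H y.

Definition classes_units (Fk H : FF -> Prop) : (FF -> Prop) -> Prop :=
  fun c => exists y, unitIn Fk y /\ c = cls Fk H y.

Fixpoint csum (Fk H : FF -> Prop) (e : nat -> FF -> Prop) (m : nat) : FF -> Prop :=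
  match m with
  | 0 => e 0
  | m'.+1 => cadd Fk H (csum Fk H e m') (e m'.+1)
  end.

(* x = a b^{-1} in q(H) (a, b in H);  x^n in H  iff  a^n = c b^n for some c in H *)
Definition seminormal (H : FF -> Prop) : Prop :=
  forall a b, H a -> H b ->
    (exists N, forall n, (N <= n)%N -> exists c, H c /\ fexp a n = fmul c (fexp b n)) ->
    exists c, H c /\ a = fmul c b.

Definition C_monoid (Fk H : FF -> Prop) : Prop :=
  submonoid Fk H /\
  (forall x, H x -> (unitIn H x <-> unitIn Fk x)) /\
  finite_set (red_classes Fk H).

(* v_p(H) is a numerical monoid (finite complement in N) for every prime p *)
Definition dense (H : FF -> Prop) : Prop :=
  forall p : P, exists N, forall m, (N <= m)%N -> exists h, H h /\ vp p h = m.

(* completely integrally closed: x = a/b in q(H), c in H, c x^n in H for all n *)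
Definition compl_int_closed (H : FF -> Prop) : Prop :=
  forall a b c, H a -> H b -> H c ->
    (forall n, exists d, H d /\ fmul c (fexp a n) = fmul d (fexp b n)) ->
    exists d, H d /\ a = fmul d b.

Definition s_ideal (H : FF -> Prop) (I : FF -> Prop) : Prop :=
  (forall x, I x -> H x) /\ (forall x h, I x -> H h -> I (fmul x h)).

(* x = u/w (u, w in H) lies in I^{-1} = (H : I) *)
Definition in_inv (H I : FF -> Prop) (u w : FF) : Prop :=
  forall c, I c -> exists d, H d /\ fmul u c = fmul d w.

(* y in H lies in I_v = (I^{-1})^{-1} *)
Definition in_v (H I : FF -> Prop) (y : FF) : Prop :=
  forall u w, H u -> H w -> in_inv H I u w ->
    exists d, H d /\ fmul y u = fmul d w.

Definition divisorial (H I : FF -> Prop) : Prop :=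
  s_ideal H I /\ forall y, H y -> in_v H I y -> I y.

Definition ACC_divisorial (H : FF -> Prop) : Prop :=
  forall a : nat -> FF -> Prop,
    (forall m, divisorial H (a m)) ->
    (forall m x, a m x -> a m.+1 x) ->
    exists N, forall m x, (N <= m)%N -> a m x -> a N x.

Definition Krull (H : FF -> Prop) : Prop :=
  compl_int_closed H /\ ACC_divisorial H.

End Factorial.
Arguments Fall V P _ : clear implicits.
Arguments Fsub V P Q _ : clear implicits.

Definition sg_iso (T1 T2 : Type) (S1 : T1 -> Prop) (op1 : T1 -> T1 -> T1)
    (S2 : T2 -> Prop) (op2 : T2 -> T2 -> T2) : Prop :=
  exists f : T1 -> T2,
    (forall x, S1 x -> S2 (f x)) /\
    (forall y, S2 y -> exists x, S1 x /\ f x = y) /\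
    (forall x y, S1 x -> S1 y -> f x = f y -> x = y) /\
    (forall x y, S1 x -> S1 y -> f (op1 x y) = op2 (f x) (f y)).

(* the monoid F(G) = {ffun G -> nat} of sequences over a finite abelian group,
   and the monoid B(G) of zero-sum sequences *)
Definition seqD (G : finZmodType) (b c : {ffun G -> nat}) : {ffun G -> nat} :=
  [ffun g => (b g + c g)%N].
Definition seq0 (G : finZmodType) : {ffun G -> nat} := [ffun _ => 0%N].
Definition zero_sum (G : finZmodType) (b : {ffun G -> nat}) : Prop :=
  (\sum_(g : G) g *+ b g)%R = 0%R.

(* transfer homomorphism theta : H -> B(G); B(G)^x = {1} *)
Definition transfer_hom (V : zmodType) (P : choiceType) (G : finZmodType)
    (H : FF V P -> Prop) (theta : FF V P -> {ffun G -> nat}) : Prop :=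
  (forall u, H u -> zero_sum (theta u)) /\
  theta (fone V P) = seq0 G /\
  (forall u v, H u -> H v -> theta (fmul u v) = seqD (theta u) (theta v)) /\
  (forall b, zero_sum b -> exists u, H u /\ theta u = b) /\
  (forall u, H u -> (theta u = seq0 G <-> unitIn H u)) /\
  (forall u b c, H u -> zero_sum b -> zero_sum c -> theta u = seqD b c ->
     exists v w, H v /\ H w /\ u = fmul v w /\ theta v = b /\ theta w = c).

Definition sg_group (T : Type) (S : T -> Prop) (op : T -> T -> T) : Prop :=
  exists u, S u /\ (forall x, S x -> op x u = x) /\
    (forall x, S x -> exists y, S y /\ op x y = u).

Section Pieces.
Variables (V : zmodType) (P : choiceType) (H : FF V P -> Prop) (e : nat -> FF V P -> Prop).

Definition Ck (k : nat) := constituent (Fall V P) H (classes (Fall V P) H) (e k).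
Definition Cks (k : nat) := constituent (Fall V P) H (red_classes (Fall V P) H) (e k).
Definition Pk (k : nat) : P -> Prop := fun p => Cks k (cls (Fall V P) H (prime_el V p)).
Definition Fk (k : nat) : FF V P -> Prop := Fsub V P (Pk k).
Definition Hk (k : nat) : FF V P -> Prop := fun x => Fk k x /\ H x.
Definition phik (k : nat) (c : FF V P -> Prop) : FF V P -> Prop :=
  cadd (Fall V P) H c (e k).
Definition phik_injective (k : nat) : Prop :=
  forall c1 c2, classes_units (Fall V P) H c1 -> classes_units (Fall V P) H c2 ->
    phik k c1 = phik k c2 -> c1 = c2.
End Pieces.

(* Main.v *)
Require Import Defs.
From HB Require Import structures.
From mathcomp Require Import all_boot all_order all_algebra.
From mathcomp Require Import finmap multiset.
From Stdlib Require Import Classical ClassicalDescription FunctionalExtensionality PropExtensionality.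
From Stdlib Require List.
From mathcomp Require Import zify.
From Stdlib Require Import Lia.
Set Implicit Arguments. Unset Strict Implicit. Unset Printing Implicit Defensive.
Set Warnings "-all".

Import GRing.Theory.
Local Open Scope mset_scope.

Definition asb (Q : Prop) : bool := if excluded_middle_informative Q then true else false.
Lemma asbP (Q : Prop) : reflect Q (asb Q).
Proof. rewrite /asb; case: excluded_middle_informative => h; constructor => //. Qed.

Lemma pigeon (T : Type) (s : list T) : forall f : nat -> T, (forall i, List.In (f i) s) ->
  exists i j, (i < j)%N /\ f i = f j.
Proof.
elim: s => [|x s IH] f hf; first by case: (hf 0).
case: (classic (exists i, f i = x)) => [[i0 hi0]|hno].
- case: (classic (exists j, f (i0 + 1 + j)%N = x)) => [[j hj]|hno2].
  + exists i0, (i0 + 1 + j)%N; split; first lia.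
    by rewrite hi0 hj.
  + have [i [j [hij e]]] : exists i j, (i < j)%N /\ f (i0 + 1 + i)%N = f (i0 + 1 + j)%N.
      apply: (IH (fun j => f (i0 + 1 + j)%N)) => j.
      case: (hf (i0 + 1 + j)%N) => //= h; by case: hno2; exists j.
    exists (i0 + 1 + i)%N, (i0 + 1 + j)%N; split => //; lia.
- apply: IH => i; case: (hf i) => //= h; by case: hno; exists i.
Qed.

Lemma pext (A B : Prop) : (A <-> B) -> A = B.
Proof. by move=> h; apply: propositional_extensionality. Qed.

Section Basic.
Variables (V : zmodType) (P : choiceType).
Local Notation FF := (FF V P).
Local Notation fmul := (@fmul V P).
Local Notation fone := (@fone V P).

Lemma FFeq (x y : FF) : x.1 = y.1 -> x.2 = y.2 -> x = y.
Proof. by case: x; case: y => /= ? ? ? ? -> ->. Qed.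

Lemma fmulC (x y : FF) : fmul x y = fmul y x.
Proof. by congr pair; [apply: addrC | apply: msetDC]. Qed.
Lemma fmulA (x y z : FF) : fmul x (fmul y z) = fmul (fmul x y) z.
Proof. by congr pair; [apply: addrA | apply: msetDA]. Qed.
Lemma fmul1 (x : FF) : fmul x fone = x.
Proof. by apply: FFeq; rewrite /= ?addr0 ?msetD0. Qed.
Lemma fmul1l (x : FF) : fmul fone x = x.
Proof. by rewrite fmulC fmul1. Qed.
Lemma fmulAC (x y z : FF) : fmul (fmul x y) z = fmul (fmul x z) y.
Proof. by rewrite -!fmulA (fmulC y). Qed.
Lemma fmulCA (x y z : FF) : fmul x (fmul y z) = fmul y (fmul x z).
Proof. by rewrite !fmulA (fmulC x). Qed.

Lemma fmul2 (x y : FF) p : (fmul x y).2 p = (x.2 p + y.2 p)%N.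
Proof. by rewrite /fmul /= msetE2. Qed.

Definition finv (x : FF) : FF := ((- x.1)%R, mset0).
Lemma fmul_inv (x : FF) : x.2 = mset0 -> fmul (finv x) x = fone.
Proof. by move=> h; apply: FFeq; rewrite /= ?addNr // h msetD0. Qed.

Definition isunit (x : FF) := x.2 = mset0.

Lemma unitFallP (x : FF) : unitIn (Fall V P) x <-> isunit x.
Proof.
split.
- case=> _ [y [_ e]]; apply/msetP => p; move: (f_equal (fun z : FF => z.2 p) e).
  by rewrite fmul2 /= !mset0E => /eqP; rewrite addn_eq0 => /andP [/eqP -> _].
- move=> h; split => //; exists (finv x); split => //; by rewrite fmulC fmul_inv.
Qed.

Lemma isunit_mul (x y : FF) : isunit (fmul x y) <-> isunit x /\ isunit y.
Proof.
rewrite /isunit; split.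
- move=> e; split; apply/msetP => p; move: (f_equal (fun z : multiset P => z p) e);
  rewrite /= msetE2 !mset0E => /eqP; rewrite addn_eq0 => /andP [/eqP h1 /eqP h2]; by rewrite ?h1 ?h2 ?mset0E.
- by case=> hx hy; rewrite /= hx hy msetD0.
Qed.

Lemma isunit_fone : isunit fone. Proof. by []. Qed.
Lemma isunit_finv x : isunit (finv x). Proof. by []. Qed.

Lemma Fsub_mul Q (x y : FF) : Fsub V P Q x -> Fsub V P Q y -> Fsub V P Q (fmul x y).
Proof.
move=> hx hy p; rewrite fmul2 addn_gt0 => /orP [] ?; [exact: hx | exact: hy].
Qed.
Lemma Fsub_unit Q (x : FF) : isunit x -> Fsub V P Q x.
Proof. by move=> h p; rewrite h mset0E. Qed.
Lemma Fsub_mull Q (x y : FF) : Fsub V P Q (fmul x y) -> Fsub V P Q x.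
Proof. by move=> h p hp; apply: h; rewrite fmul2 ltn_addr. Qed.
Lemma Fsub_prime Q p : Q p -> Fsub V P Q (prime_el V p).
Proof. by move=> hq p'; rewrite /= msetnE; case: eqP => // -> . Qed.

Lemma prime_nonunit p : ~ isunit (prime_el V p).
Proof. move=> h; move: (f_equal (fun z : multiset P => z p) h) => /=; by rewrite msetnxx mset0E. Qed.

Lemma nonunit_mull (x y : FF) : ~ isunit x -> ~ isunit (fmul x y).
Proof. by move=> h /isunit_mul []. Qed.

Definition fexp' (x : FF) n := fexp x n.
Lemma fexpS (x : FF) n : fexp x n.+1 = fmul x (fexp x n). Proof. by []. Qed.
Lemma fexp2 (x : FF) n p : (fexp x n).2 p = (n * x.2 p)%N.
Proof.
elim: n => [|n IH]; first by rewrite /= mset0E.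
by rewrite fexpS fmul2 IH mulSn.
Qed.
Lemma fexpM (x y : FF) n : fexp (fmul x y) n = fmul (fexp x n) (fexp y n).
Proof.
elim: n => [|n IH]; first by rewrite /= fmul1.
rewrite !fexpS IH; rewrite -!fmulA; congr fmul; by rewrite fmulCA.
Qed.

Section Equiv.
Variables (Fk H : FF -> Prop).
Hypothesis Fk1 : Fk fone.
Hypothesis FkM : forall x y, Fk x -> Fk y -> Fk (fmul x y).

Lemma Heq_refl y : Hequiv Fk H y y. Proof. by move=> x _; split. Qed.
Lemma Heq_sym y y' : Hequiv Fk H y y' -> Hequiv Fk H y' y.
Proof. by move=> h x hx; apply: iff_sym (h x hx). Qed.
Lemma Heq_trans y1 y2 y3 : Hequiv Fk H y1 y2 -> Hequiv Fk H y2 y3 -> Hequiv Fk H y1 y3.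
Proof. by move=> h1 h2 x hx; apply: iff_trans (h1 x hx) (h2 x hx). Qed.
Lemma Heq_mul a y y' : Fk a -> Hequiv Fk H y y' -> Hequiv Fk H (fmul a y) (fmul a y').
Proof. by move=> ha h x hx; rewrite !fmulA; apply: h; apply: FkM. Qed.
Lemma Heq_mulr a y y' : Fk a -> Hequiv Fk H y y' -> Hequiv Fk H (fmul y a) (fmul y' a).
Proof. by move=> ha h; rewrite !(fmulC _ a); apply: Heq_mul. Qed.
Lemma Heq_mul2 a a' b b' : Fk a' -> Fk b -> Hequiv Fk H a a' -> Hequiv Fk H b b' ->
  Hequiv Fk H (fmul a b) (fmul a' b').
Proof.
move=> ha hb h1 h2; apply: (@Heq_trans _ (fmul a' b)); first exact: Heq_mulr.
exact: Heq_mul.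
Qed.
Lemma Heq_H y y' : Hequiv Fk H y y' -> H y -> H y'.
Proof. by move=> h hy; move: (h fone Fk1); rewrite !fmul1l => [[/(_ hy)]]. Qed.

Lemma cls_eq y y' : Hequiv Fk H y y' -> cls Fk H y = cls Fk H y'.
Proof.
move=> h; apply: functional_extensionality => z; apply: pext; split; case=> hz h'; split => //.
- exact: Heq_trans (Heq_sym h) h'.
- exact: Heq_trans h h'.
Qed.
Lemma cls_eqE y y' : Fk y' -> cls Fk H y = cls Fk H y' -> Hequiv Fk H y y'.
Proof. move=> hy e; have : cls Fk H y' y' by split => //; apply: Heq_refl.
by rewrite -e => [[]]. Qed.

Lemma cadd_cls a b : Fk a -> Fk b ->
  cadd Fk H (cls Fk H a) (cls Fk H b) = cls Fk H (fmul a b).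
Proof.
move=> ha hb; apply: functional_extensionality => z; apply: pext; split.
- case=> a' [b' [[ha' e1] [[hb' e2] hz]]]; rewrite (@cls_eq (fmul a b) (fmul a' b')) //.
  exact: Heq_mul2.
- move=> hz; exists a, b; split; first by split => //; apply: Heq_refl.
  by split => //; split => //; apply: Heq_refl.
Qed.
End Equiv.

Lemma Fall1 : Fall V P fone. Proof. by []. Qed.
Lemma FallM x y : Fall V P x -> Fall V P y -> Fall V P (fmul x y). Proof. by []. Qed.

End Basic.

Record fgrp := FGrp {
  gN : nat;
  gzero : 'I_gN;
  gopp : 'I_gN -> 'I_gN;
  gadd : 'I_gN -> 'I_gN -> 'I_gN;
  gA : associative gadd;
  gC : commutative gadd;
  g0 : left_id gzero gadd;
  gNl : left_inverse gzero gopp gadd }.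
Definition gT (D : fgrp) : Type := 'I_(gN D).
HB.instance Definition _ (D : fgrp) := Finite.on (gT D).
HB.instance Definition _ (D : fgrp) :=
  GRing.isZmodule.Build (gT D) (@gA D) (@gC D) (@g0 D) (@gNl D).
Lemma gaddE (D : fgrp) (x y : gT D) : (x + y)%R = gadd x y. Proof. by []. Qed.
Lemma gzeroE (D : fgrp) : (0 : gT D)%R = gzero D. Proof. by []. Qed.

Section Main.
Variables (V : zmodType) (P : choiceType) (H : FF V P -> Prop) (n : nat)
  (e : nat -> FF V P -> Prop).
Local Notation FF := (FF V P).
Local Notation fmul := (@fmul V P).
Local Notation fone := (@fone V P).
Local Notation Fa := (Fall V P).
Local Notation eqF := (Hequiv Fa H).
Local Notation clsF := (cls Fa H).
Local Notation pr := (prime_el V).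

Hypothesis hCm : C_monoid Fa H.
Hypothesis hpr : forall c, red_classes Fa H c -> exists p, c (pr p).

Lemma H1 : H fone. Proof. by case: hCm => [[_ [h _]] _]. Qed.
Lemma HM x y : H x -> H y -> H (fmul x y). Proof. by case: hCm => [[_ [_ h]] _]; apply: h. Qed.
Lemma Hexp x m : H x -> H (fexp x m).
Proof. move=> hx; elim: m => [|m IH]; [exact: H1 | rewrite fexpS; exact: HM]. Qed.

Lemma HunitP u : H u -> (unitIn H u <-> isunit u).
Proof. move=> hu; case: hCm => _ [h _]; rewrite -unitFallP; exact: h. Qed.

Lemma Hunit_eq1 u : H u -> isunit u -> eqF u fone.
Proof.
move=> hu hun; have := (HunitP hu).2 hun => [[_ [v [hv e0]]]].
move=> x _; rewrite fmul1; split => hx.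
- by rewrite -[x]fmul1 -e0 fmulA; apply: HM.
- exact: HM.
Qed.

Lemma eqF_H y y' : eqF y y' -> H y -> H y'. Proof. exact: Heq_H. Qed.
Lemma eqF_sym y y' : eqF y y' -> eqF y' y. Proof. exact: Heq_sym. Qed.
Lemma eqF_trans y1 y2 y3 : eqF y1 y2 -> eqF y2 y3 -> eqF y1 y3. Proof. exact: Heq_trans. Qed.
Lemma eqF_mul a y y' : eqF y y' -> eqF (fmul a y) (fmul a y'). Proof. by move=> h; apply: Heq_mul. Qed.
Lemma eqF_mulr a y y' : eqF y y' -> eqF (fmul y a) (fmul y' a). Proof. by move=> h; apply: Heq_mulr. Qed.
Lemma eqF_mul2 a a' b b' : eqF a a' -> eqF b b' -> eqF (fmul a b) (fmul a' b').
Proof. by move=> h1 h2; apply: Heq_mul2. Qed.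
Lemma eqF_refl y : eqF y y. Proof. exact: Heq_refl. Qed.
Lemma clsF_eq y y' : eqF y y' -> clsF y = clsF y'. Proof. exact: cls_eq. Qed.
Lemma clsF_eqE y y' : clsF y = clsF y' -> eqF y y'. Proof. exact: cls_eqE. Qed.
Lemma caddF y y' : cadd Fa H (clsF y) (clsF y') = clsF (fmul y y').
Proof. exact: cadd_cls. Qed.

Lemma all_red y : red_classes Fa H (clsF y).
Proof.
have [q hq] := hpr (ex_intro _ fone (conj (or_intror erefl) erefl)).
case: hq => _ hq.
exists (fmul y (pr q)); split; last first.
  apply: clsF_eq; have := eqF_mul y hq; by rewrite fmul1.
left; split => //; move/unitFallP; rewrite fmulC.
exact: nonunit_mull (@prime_nonunit _ _ q).
Qed.

Lemma red_eq : red_classes Fa H = classes Fa H.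
Proof.
apply: functional_extensionality => c; apply: pext; split.
- by case=> y [_ ->]; exists y.
- by case=> y [_ ->]; apply: all_red.
Qed.

Lemma prime_in y : exists p, eqF y (pr p).
Proof. by have [p [_ h]] := hpr (all_red y); exists p. Qed.

Lemma fin_cls : exists s : seq (FF -> Prop), forall y, List.In (clsF y) s.
Proof. case: hCm => _ [_ [s hs]]; exists s => y; apply: hs; exact: all_red. Qed.

Variable k : nat.
Variable pk : P.
Hypothesis hek : e k = clsF (pr pk).
Hypothesis hidem : cadd Fa H (e k) (e k) = e k.
Local Notation r := (pr pk).

Lemma rr : eqF (fmul r r) r.
Proof. by apply: clsF_eqE; rewrite -caddF -hek. Qed.

Definition inCk y := eqF (fmul y r) y /\ exists z, eqF (fmul y z) r.

Lemma Ck_iff y : Ck H e k (clsF y) <-> inCk y.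
Proof.
rewrite /Ck /constituent hek caddF; split.
- case=> _ [e1 [c [[z [_ ->]] e2]]]; split; first exact: clsF_eqE.
  by exists z; apply: clsF_eqE; rewrite -caddF.
- case=> h1 [z h2]; split; first by exists y.
  split; first exact: clsF_eq.
  by exists (clsF z); split; [exists z | rewrite caddF; apply: clsF_eq].
Qed.

Lemma Cks_Ck : Cks H e k = Ck H e k.
Proof. by rewrite /Cks /Ck red_eq. Qed.

Lemma Pk_iff p : Pk H e k p <-> inCk (pr p).
Proof. by rewrite /Pk Cks_Ck Ck_iff. Qed.

Lemma inCk_eq y y' : eqF y y' -> inCk y -> inCk y'.
Proof.
move=> h [h1 [z h2]]; split.
- apply: eqF_trans (eqF_mulr _ (eqF_sym h)) _; exact: eqF_trans h1 h.
- by exists z; apply: eqF_trans (eqF_mulr _ (eqF_sym h)) h2.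
Qed.

Lemma inCk_mul a b : inCk a -> inCk b -> inCk (fmul a b).
Proof.
move=> [ha1 [za ha2]] [hb1 [zb hb2]]; split.
- rewrite -fmulA; exact: eqF_mul.
- exists (fmul za zb); rewrite fmulA (fmulAC a b) -fmulA.
  apply: eqF_trans (eqF_mul2 ha2 hb2) rr.
Qed.

Lemma inCk_unit eps a : isunit eps -> inCk a -> inCk (fmul eps a).
Proof.
move=> he [h1 [z h2]]; split.
- rewrite -fmulA; exact: eqF_mul.
- exists (fmul (finv eps) z).
  by rewrite fmulA (fmulAC eps) (fmulC eps) fmul_inv // fmul1l.
Qed.

Lemma inCk_r : inCk r.
Proof. split; first exact: rr. by exists r; exact: rr. Qed.

Local Notation Fk := (Fk H e k).
Lemma Fk1 : Fk fone. Proof. exact: Fsub_unit. Qed.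
Lemma FkM x y : Fk x -> Fk y -> Fk (fmul x y). Proof. exact: Fsub_mul. Qed.
Lemma Fk_r : Fk r. Proof. apply: Fsub_prime; rewrite Pk_iff; exact: inCk_r. Qed.

Lemma seq_mset_nil : seq_mset [::] = (mset0 : {mset P}).
Proof. by apply/msetP => x; rewrite mset_seqE mset0E. Qed.

Lemma L1_seq (s : seq P) : forall v, s <> [::] -> (forall p, p \in s -> inCk (pr p)) ->
  inCk (v, seq_mset s).
Proof.
elim: s => [|a s IH] v // _ hs.
have ha : inCk (pr a) by apply: hs; rewrite inE eqxx.
have -> : (v, seq_mset (a :: s)) = fmul (pr a) (v, seq_mset s).
  by rewrite mset_cons /fmul /= add0r.
case: s IH hs => [|b s] IH hs.
- rewrite seq_mset_nil fmulC; apply: inCk_unit => //.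
- apply: inCk_mul => //; apply: IH => // p hp; apply: hs; by rewrite inE hp orbT.
Qed.

Lemma L1 y : Fk y -> ~ isunit y -> inCk y.
Proof.
move=> hy hu; have -> : y = (y.1, seq_mset (enum_mset y.2)) by rewrite seq_mset_id; case: y {hy hu}.
apply: L1_seq.
- move=> e0; apply: hu; by rewrite /isunit -(seq_mset_id y.2) e0 seq_mset_nil.
- move=> p hp; rewrite -Pk_iff; apply: hy.
  have : p \in y.2 by [].
  by rewrite in_mset.
Qed.

Lemma fexpD (x : FF) a b : fexp x (a + b) = fmul (fexp x a) (fexp x b).
Proof. elim: a => [|a IH]; first by rewrite fmul1l. by rewrite addSn !fexpS IH fmulA. Qed.

Lemma inCk_pow a m : inCk a -> inCk (fexp a m.+1).
Proof.
move=> ha; elim: m => [|m IH]; first by rewrite fexpS fmul1.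
by rewrite fexpS; apply: inCk_mul.
Qed.

Lemma pow_r a : inCk a -> exists d, eqF (fexp a d.+1) r.
Proof.
move=> ha; have [s hs] := fin_cls.
have [i [j [hij e1]]] := @pigeon _ s (fun i => clsF (fexp a i.+1)) (fun i => hs _).
have e2 := clsF_eqE e1.
case: ha => [ha1 [z hz]].
have haz : forall m, eqF (fexp (fmul a z) m.+1) r.
  elim=> [|m IH]; first by rewrite fexpS fmul1.
  rewrite fexpS; apply: eqF_trans (eqF_mul2 hz IH) rr.
have hd : (j.+1 = i.+1 + (j - i))%N by lia.
exists (j - i - 1)%N.
have hd' : (j - i = (j - i - 1).+1)%N by lia.
rewrite hd fexpD in e2.
have e3 := eqF_mul (fexp z i.+1) e2.
rewrite fmulA !(fmulC (fexp z _)) -fexpM in e3.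
have e4 : eqF r (fmul r (fexp a (j - i))).
  apply: eqF_trans (eqF_sym (haz i)) _.
  apply: eqF_trans e3 _; rewrite fmulC [X in eqF _ X]fmulC; apply: eqF_mul; exact: haz.
apply: eqF_sym; rewrite -hd'; apply: eqF_trans e4 _.
rewrite fmulC; case: (inCk_pow (j - i - 1) (conj ha1 (ex_intro _ z hz))); by rewrite -hd'.
Qed.

Lemma T a : H a -> inCk a -> eqF a r.
Proof.
move=> hH ha; have [d hd] := pow_r ha.
move=> x _; split => hx.
- apply: eqF_H (eqF_mul x hd) _.
  by rewrite fexpS fmulA; apply: HM => //; apply: Hexp.
- have h1 : H (fmul (fmul x r) a) by apply: HM.
  have e1 : eqF (fmul x (fmul a r)) (fmul x a) by apply: eqF_mul; case: ha.
  apply: eqF_H e1 _; by rewrite fmulA fmulAC.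
Qed.

Lemma Hr_of y : H y -> e k = clsF y -> H r.
Proof. by move=> hy e1; apply: eqF_H hy; apply: clsF_eqE; rewrite -e1. Qed.


Local Notation Hk := (Hk H e k).
Local Notation eqk := (Hequiv Fk Hk).
Local Notation clsk := (cls Fk Hk).

Lemma restrict y y' : Fk y -> Fk y' -> eqF y y' -> eqk y y'.
Proof.
move=> hy hy' h x hx; rewrite /Defs.Hk; split; case=> h1 h2; split.
- exact: FkM. - by apply/(h x). - exact: FkM. - by apply/(h x).
Qed.

Lemma eqk_refl y : eqk y y. Proof. exact: Heq_refl. Qed.
Lemma eqk_sym y y' : eqk y y' -> eqk y' y. Proof. exact: Heq_sym. Qed.
Lemma eqk_trans y1 y2 y3 : eqk y1 y2 -> eqk y2 y3 -> eqk y1 y3. Proof. exact: Heq_trans. Qed.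

Lemma part_c : ~ classes_H Fa H (e k) -> forall x, Hk x <-> unitIn H x.
Proof.
move=> hn x; split.
- case=> hx hH; case: (classic (isunit x)) => hu; first by apply/(HunitP hH).
  case: hn; exists x; split => //; rewrite hek; apply: clsF_eq; apply: eqF_sym.
  apply: T => //; exact: L1.
- move=> hu; have hH : H x by case: hu.
  split => //; apply: Fsub_unit; exact/(HunitP hH).
Qed.

Lemma part_a : C_monoid Fk Hk.
Proof.
split; last split.
- split; first by move=> x [].
  split; first by split; [exact: Fk1 | exact: H1].
  move=> x y [h1 h2] [h3 h4]; split; [exact: FkM | exact: HM].
- move=> x [hx hH]; split.
  + by case=> _ [y [[hy _] e0]]; split => //; exists y.
  + case=> _ [y [hy e0]].
    have h0 : isunit (fmul x y) by rewrite e0.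
    have hux : isunit x by case/isunit_mul: h0.
    have := (HunitP hH).2 hux => [[_ [v [hv ev]]]].
    have h0' : isunit (fmul x v) by rewrite ev.
    have huv : isunit v by case/isunit_mul: h0'.
    split => //; exists v; split => //; split => //; exact: Fsub_unit.
- have [s hs] := fin_cls.
  pose g := fun c : FF -> Prop => fun z => Fk z /\ exists y, Fk y /\ c = clsF y /\ eqk y z.
  exists (List.map g s) => c [y [hy ->]].
  have hFy : Fk y by case: hy => [[]|->] //; exact: Fk1.
  have -> : clsk y = g (clsF y).
    apply: functional_extensionality => z; apply: pext; split.
    * by case=> hz h; split => //; exists y.
    * case=> hz [y' [hy' [e1 h]]]; split => //.
      apply: eqk_trans h; apply: restrict => //; exact: clsF_eqE.
  exact: List.in_map.
Qed.

Lemma part_b : seminormal H -> seminormal Hk.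
Proof.
move=> hsn a b [ha hHa] [hb hHb] [N hN].
have [c [hc ec]] : exists c, H c /\ a = fmul c b.
  apply: hsn => //; exists N => m hm; have [c [[_ hc] ec]] := hN m hm; by exists c.
exists c; split => //; split => //; apply: (@Fsub_mull _ _ _ c b); by rewrite -ec.
Qed.

Lemma iso_gen (S2 : (FF -> Prop) -> Prop) (op2 : (FF -> Prop) -> (FF -> Prop) -> FF -> Prop)
    (g : FF -> FF -> Prop) :
  (forall y, Fk y -> S2 (g y)) ->
  (forall d, S2 d -> exists y, Fk y /\ g y = d) ->
  (forall y y', Fk y -> Fk y' -> g y = g y' -> eqk y y') ->
  (forall y y', Fk y -> Fk y' -> g (fmul y y') = op2 (g y) (g y')) ->
  (forall y y', Fk y -> Fk y' -> eqk y y' -> g y = g y') ->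
  sg_iso (classes Fk Hk) (cadd Fk Hk) S2 op2.
Proof.
move=> h1 h2 h3 h4 h5.
pose f := fun (c : FF -> Prop) z => exists y, c y /\ g y z.
have fE : forall y, Fk y -> f (clsk y) = g y.
  move=> y hy; apply: functional_extensionality => z; apply: pext; split.
  - case=> y' [[hy' h] hz]; by rewrite (h5 y y').
  - move=> hz; exists y; split => //; split => //; exact: eqk_refl.
exists f; split; [|split; [|split]].
- by move=> c [y [hy ->]]; rewrite fE //; apply: h1.
- move=> d hd; have [y [hy <-]] := h2 d hd; exists (clsk y); split; [by exists y | exact: fE].
- move=> c c' [y [hy ->]] [y' [hy' ->]]; rewrite !fE // => eg.
  apply: cls_eq; exact: h3.
- move=> c c' [y [hy ->]] [y' [hy' ->]]; rewrite (cadd_cls Hk FkM) //.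
  by rewrite !fE //; [apply: h4 | apply: FkM].
Qed.

Lemma r_nonunit y : ~ isunit (fmul y r).
Proof. rewrite fmulC; apply: nonunit_mull; exact: prime_nonunit. Qed.

Lemma prime_rep d : Ck H e k d -> exists p, Fk (pr p) /\ d = clsF (pr p) /\ inCk (pr p).
Proof.
move=> hd; have [[z [_ ez]] _] := hd; subst d.
have hz : inCk z by apply/Ck_iff.
have [p hp] := prime_in z.
have hip : inCk (pr p) := inCk_eq hp hz.
exists p; split; first by apply: Fsub_prime; apply/Pk_iff.
split => //; exact: clsF_eq.
Qed.

Section WithHr.
Hypothesis hr : H r.

Lemma L2 y y' : Fk y -> Fk y' -> ~ isunit y -> ~ isunit y' -> eqk y y' -> eqF y y'.
Proof.
move=> hy hy' huy huy' h.
have iy := L1 hy huy; case: (iy) => [iy1 [z hz]].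
have izr : inCk (fmul z r).
  split; first by rewrite -fmulA; apply: eqF_mul; exact: rr.
  exists y; rewrite fmulC fmulA; apply: eqF_trans (eqF_mulr _ hz) rr.
have [p hp] := prime_in (fmul z r).
have ip := inCk_eq hp izr.
have Fp : Fk (pr p) by apply: Fsub_prime; apply/Pk_iff.
have eyp : eqF (fmul y (pr p)) r.
  apply: eqF_trans (eqF_mul y (eqF_sym hp)) _; rewrite fmulA.
  exact: eqF_trans (eqF_mulr _ hz) rr.
have Hyp : Hk (fmul (pr p) y) by split; [exact: FkM | rewrite fmulC; exact: eqF_H (eqF_sym eyp) hr].
have [_ Hy'p] := (h (pr p) Fp).1 Hyp.
have iy'p : inCk (fmul y' (pr p)) by apply: L1; [exact: FkM | rewrite fmulC; apply: nonunit_mull; exact: prime_nonunit].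
have Hy'p' : H (fmul y' (pr p)) by rewrite fmulC.
have ey'p := T Hy'p' iy'p.
have iy' := L1 hy' huy'.
apply: eqF_sym; apply: eqF_trans (eqF_sym iy'.1) _.
apply: eqF_trans (eqF_mul y' (eqF_sym eyp)) _.
rewrite fmulCA; apply: eqF_trans (eqF_mul y ey'p) _; exact: iy1.
Qed.

Lemma key1 w : Fk w -> H w -> eqF (fmul w r) r.
Proof.
move=> hw hH; case: (classic (isunit w)) => hu.
- have := eqF_mulr r (Hunit_eq1 hH hu); by rewrite fmul1l.
- have iw := L1 hw hu; apply: eqF_trans iw.1 _; exact: T.
Qed.

Lemma wd_d y y' : Fk y -> Fk y' -> eqk y y' -> eqF (fmul y r) (fmul y' r).
Proof.
move=> hy hy' h; apply: L2; try exact: FkM Fk_r; try exact: r_nonunit.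
apply: (Heq_mulr FkM) => //; exact: Fk_r.
Qed.

Section Inj.
Hypothesis hinj : phik_injective H e k.

Lemma key2 w : Fk w -> eqF (fmul w r) r -> H w.
Proof.
move=> hw h; case: (classic (isunit w)) => hu.
- have e1 : clsF w = clsF fone.
    apply: hinj; [by exists w; split => //; apply/unitFallP | by exists fone; split => //; apply/unitFallP |].
    by rewrite /phik hek !caddF fmul1l; apply: clsF_eq.
  apply: eqF_H H1; apply: eqF_sym; exact: clsF_eqE.
- have iw := L1 hw hu; apply: eqF_H hr; apply: eqF_sym; exact: eqF_trans (eqF_sym iw.1) h.
Qed.

Lemma inj_d y y' : Fk y -> Fk y' -> eqF (fmul y r) (fmul y' r) -> eqk y y'.
Proof.
have half : forall y y', Fk y -> Fk y' -> eqF (fmul y r) (fmul y' r) ->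
    forall x, Fk x -> Hk (fmul x y) -> Hk (fmul x y').
  move=> {}y {}y' hy hy' h x hx [_ hxy]; split; first exact: FkM.
  apply: key2; first exact: FkM.
  apply: eqF_trans (key1 (FkM hx hy) hxy); rewrite -!fmulA; apply: eqF_mul; exact: eqF_sym.
move=> hy hy' h x hx; split; [exact: half | apply: half => //; exact: eqF_sym].
Qed.

Lemma part_d : sg_iso (classes Fk Hk) (cadd Fk Hk) (Ck H e k) (cadd Fa H).
Proof.
apply: (@iso_gen _ _ (fun y => clsF (fmul y r))).
- move=> y hy; apply/Ck_iff; apply: L1; [exact: FkM Fk_r | exact: r_nonunit].
- move=> d hd; have [p [Fp [-> ip]]] := prime_rep hd.
  exists (pr p); split => //; apply: clsF_eq; exact: ip.1.
- move=> y y' hy hy' eg; apply: inj_d => //; exact: clsF_eqE.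
- move=> y y' hy hy'; rewrite caddF; apply: clsF_eq.
  apply: eqF_sym; rewrite fmulA (fmulAC y r) -!fmulA; do 2 apply: eqF_mul; exact: rr.
- move=> y y' hy hy' h; apply: clsF_eq; exact: wd_d.
Qed.
End Inj.

Section NonInj.
Hypothesis hninj : ~ phik_injective H e k.

Lemma delta_ex : exists d, isunit d /\ eqF (fmul d r) r /\ ~ H d.
Proof.
apply: NNPP => hno; apply: hninj => c1 c2 [a [ha ->]] [b [hb ->]].
move/unitFallP in ha; move/unitFallP in hb.
rewrite /phik hek !caddF => eab; have eab' := clsF_eqE eab.
apply: NNPP => hne; apply: hno; exists (fmul (finv a) b); split; first by apply/isunit_mul.
split.
- rewrite -fmulA; apply: eqF_trans (eqF_mul _ (eqF_sym eab')) _.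
  by rewrite fmulA fmul_inv // fmul1l; apply: eqF_refl.
- move=> hd; apply: hne; apply: clsF_eq.
  have := eqF_mul a (Hunit_eq1 hd (proj2 (isunit_mul _ _) (conj (isunit_finv a) hb))).
  rewrite fmul1 fmulA (fmulC a) fmul_inv // fmul1l; exact: eqF_sym.
Qed.

Lemma mixed_false eps y : isunit eps -> Fk y -> ~ isunit y -> eqk eps y -> False.
Proof.
move=> he hy hu h.
have [d [hd [edr hnd]]] := delta_ex.
have Fi : Fk (finv eps) by apply: Fsub_unit.
have Fd : Fk d by apply: Fsub_unit.
have h1 : Hk (fmul (finv eps) eps) by rewrite fmul_inv //; split; [exact: Fk1 | exact: H1].
have [_ h2] := (h _ Fi).1 h1.
have h3 : eqF (fmul (finv eps) y) r by apply: T => //; apply: L1; [exact: FkM | move/isunit_mul => [] //].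
have h4 : Hk (fmul (fmul d (finv eps)) y).
  split; first by apply: FkM => //; exact: FkM.
  rewrite -fmulA; apply: eqF_H hr; apply: eqF_sym; apply: eqF_trans (eqF_mul d h3) edr.
have [_ h5] := (h _ (FkM Fd Fi)).2 h4.
by apply: hnd; move: h5; rewrite -fmulA fmul_inv // fmul1.
Qed.

Lemma wd_e y y' : Fk y -> Fk y' -> eqk y y' -> eqF y y'.
Proof.
move=> hy hy' h; case: (classic (isunit y)) => hu; case: (classic (isunit y')) => hu'.
- have Fi : Fk (finv y) by apply: Fsub_unit.
  have h1 : Hk (fmul (finv y) y) by rewrite fmul_inv //; split; [exact: Fk1 | exact: H1].
  have [_ h2] := (h _ Fi).1 h1.
  have e1 := Hunit_eq1 h2 (proj2 (isunit_mul _ _) (conj (isunit_finv y) hu')).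
  have := eqF_mul y e1; rewrite fmul1 fmulA (fmulC y) fmul_inv // fmul1l; exact: eqF_sym.
- by case: (mixed_false hu hy' hu' h).
- by case: (mixed_false hu' hy hu (eqk_sym h)).
- exact: L2.
Qed.

Lemma part_e : sg_iso (classes Fk Hk) (cadd Fk Hk)
  (fun c => classes_units Fa H c \/ Ck H e k c) (cadd Fa H).
Proof.
apply: (@iso_gen _ _ (fun y => clsF y)).
- move=> y hy; case: (classic (isunit y)) => hu.
  + by left; exists y; split => //; apply/unitFallP.
  + by right; apply/Ck_iff; apply: L1.
- move=> d [[y [hy ->]]|hd].
  + exists y; split => //; apply: Fsub_unit; exact/unitFallP.
  + have [p [Fp [-> ip]]] := prime_rep hd; by exists (pr p).
- move=> y y' hy hy' eg; apply: restrict => //; exact: clsF_eqE.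
- by move=> y y' hy hy'; rewrite caddF.
- move=> y y' hy hy' h; apply: clsF_eq; exact: wd_e.
Qed.
End NonInj.
End WithHr.

Definition fdiv (b a : FF) : FF := ((b.1 - a.1)%R, b.2 `\` a.2).

Lemma fdivK (a b : FF) : (forall p, a.2 p <= b.2 p)%N -> b = fmul a (fdiv b a).
Proof.
move=> h; apply: FFeq; first by rewrite /= addrC subrK.
apply/msetP => p; rewrite /= !msetE2; by rewrite subnKC.
Qed.

Lemma Fk_fdiv (a b : FF) : Fk b -> Fk (fdiv b a).
Proof. move=> hb p; rewrite /= msetE2 => hp; apply: hb; lia. Qed.

Section Group.
Hypothesis hg : sg_group (classes Fk Hk) (cadd Fk Hk).

Lemma Hk_eq1 h : Hk h -> eqk h fone.
Proof.
move=> [hF hH]; case: (classic (isunit h)) => hu.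
- apply: restrict => //; [exact: Fk1 | exact: Hunit_eq1].
have [u [[yu [hyu ->]] [hid hinv]]] := hg.
have eu : clsk yu = clsk fone.
  have := hid (clsk fone) (ex_intro _ fone (conj Fk1 erefl)).
  by rewrite (cadd_cls Hk FkM) ?fmul1l //; exact: Fk1.
have [c [[z [hz ->]] ez]] := hinv (clsk h) (ex_intro _ h (conj hF erefl)).
rewrite (cadd_cls Hk FkM) // eu in ez.
have ehz := cls_eqE Fk1 ez.
have Hhz : Hk (fmul h z).
  have := (ehz fone Fk1).2; rewrite !fmul1l; apply; split; [exact: Fk1 | exact: H1].
have ihz : inCk (fmul h z) by apply: L1; [exact: FkM | exact: nonunit_mull].
have e1 := T Hhz.2 ihz.
have e2 := T hH (L1 hF hu).
apply: eqk_trans ehz; apply: restrict => //; first exact: FkM.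
exact: eqF_trans e2 (eqF_sym e1).
Qed.

Lemma Sat a c : Hk a -> Fk c -> Hk (fmul a c) -> Hk c.
Proof.
move=> ha hc hac; move: (Hk_eq1 ha hc) => [h1 _]; rewrite fmul1 in h1; apply: h1; by rewrite fmulC.
Qed.

Lemma Sat2 a b : Hk a -> Hk b -> (forall p, a.2 p <= b.2 p)%N ->
  Hk (fdiv b a) /\ b = fmul a (fdiv b a).
Proof.
move=> ha hb h; have eb := fdivK h; split => //.
apply: (Sat ha); [exact: Fk_fdiv hb.1 | by rewrite -eb].
Qed.

Lemma arith1 (A B c d : nat) : (A < B)%N -> (c + c.+1 * A = d + c.+1 * B)%N -> False.
Proof.
move=> hAB eq; have : (c.+1 * A.+1 <= c.+1 * B)%N by rewrite leq_mul2l.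
rewrite mulnS; move: eq; move: (c.+1 * A)%N (c.+1 * B)%N => X Y; lia.
Qed.

Lemma cic : compl_int_closed Hk.
Proof.
move=> a b c ha hb hc h.
have hle : forall p, (b.2 p <= a.2 p)%N.
  move=> p; apply/negP => /negP; rewrite -ltnNge => hlt.
  have [d [_ ed]] := h (c.2 p).+1.
  have := f_equal (fun z : FF => z.2 p) ed; rewrite !fmul2 !fexp2; exact: arith1 hlt.
have [hd ed] := Sat2 hb ha hle.
by exists (fdiv a b); split => //; rewrite fmulC.
Qed.

Lemma div_char (I : FF -> Prop) y : divisorial Hk I -> Hk y ->
  (forall p, exists c, I c /\ (c.2 p <= y.2 p)%N) -> I y.
Proof.
move=> [[hsub hmul] hv] hy hc; apply: hv => // u w hu hw hinv.
have hle : forall p, (w.2 p <= (fmul y u).2 p)%N.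
  move=> p; have [c [hIc hcp]] := hc p; have [d [_ ed]] := hinv c hIc.
  have := f_equal (fun z : FF => z.2 p) ed; rewrite !fmul2 => eq; lia.
have hyu : Hk (fmul y u) by case: hy; case: hu => ? ? ? ?; split; [exact: FkM | exact: HM].
have [hd ed] := Sat2 hw hyu hle.
by exists (fdiv (fmul y u) w); split => //; rewrite [RHS]fmulC.
Qed.

Lemma stab (I : eqType) (Q : I -> nat -> Prop) :
  (forall i m, Q i m -> Q i m.+1) -> forall (s : seq I) m0,
  exists N, (m0 <= N)%N /\ forall i, i \in s -> forall m, (N <= m)%N -> Q i m -> Q i N.
Proof.
move=> hQ; have mono : forall i m m', (m <= m')%N -> Q i m -> Q i m'.
  move=> i m m' hmm'; rewrite -(subnKC hmm'); elim: (m' - m)%N => [|d IH]; first by rewrite addn0.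
  by rewrite addnS => /IH; apply: hQ.
elim=> [|i s IH] m0; first by exists m0.
have [N1 [h1 h2]] := IH m0.
case: (classic (exists t, Q i t)) => [[t ht]|hno].
- exists (maxn N1 t); split; first by rewrite leq_max h1.
  move=> j; rewrite inE => /orP [/eqP ->|hj] m hm hq.
  + apply: mono ht; by rewrite leq_maxr.
  + apply: (mono _ N1); first by rewrite leq_maxl.
    apply: (h2 j hj m) => //; apply: leq_trans hm; by rewrite leq_maxl.
- exists N1; split => // j; rewrite inE => /orP [/eqP ->|hj] m hm hq.
  + by case: hno; exists m.
  + exact: h2 hj m hm hq.
Qed.

Lemma acc : ACC_divisorial Hk.
Proof.
move=> a hdiv hch.
have mono : forall m m' x, (m <= m')%N -> a m x -> a m' x.
  move=> m m' x hmm'; rewrite -(subnKC hmm'); elim: (m' - m)%N => [|d IH]; first by rewrite addn0.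
  by rewrite addnS => /IH; apply: hch.
case: (classic (exists m0 w, a m0 w)) => [[m0 [w hw]]|hno]; last first.
  by exists 0%N => m x _ hx; case: hno; exists m, x.
pose Q := fun (pj : P * nat) m => exists c, a m c /\ (c.2 pj.1 <= pj.2)%N.
have hQ : forall i m, Q i m -> Q i m.+1 by move=> i m [c [hc hcp]]; exists c; split => //; apply: hch.
have [N [hN hs]] := stab hQ (allpairs_dep (fun (p : P) (j : nat) => (p, j)) (enum_mset w.2) (fun p => seq.iota 0 (w.2 p).+1)) m0.
exists N => m y hm hy.
have hyk : Hk y by have [[hsub _] _] := hdiv m; apply: hsub.
apply: div_char => // p.
case: (leqP (w.2 p) (y.2 p)) => hwy.
- exists w; split => //; exact: mono hw.
- have hin : (p, y.2 p) \in (allpairs_dep (fun (p : P) (j : nat) => (p, j)) (enum_mset w.2) (fun p => seq.iota 0 (w.2 p).+1)).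
    apply/allpairsPdep; exists p, (y.2 p); split => //.
    + have : (0 < w.2 p)%N by lia.
      by rewrite -in_mset.
    + rewrite mem_iota; lia.
  have := hs _ hin m hm (ex_intro _ y (conj hy (leqnn _))).
  by case=> c [hc hcp]; exists c.
Qed.

Lemma part_f : Krull Hk.
Proof. split; [exact: cic | exact: acc]. Qed.
End Group.

Section WithHr2.
Hypothesis hr : H r.

Definition eqv y y' := exists eps, isunit eps /\ eqF y (fmul eps y').

Lemma eqv_refl y : eqv y y.
Proof. exists fone; split => //; rewrite fmul1l; exact: eqF_refl. Qed.
Lemma eqv_of y y' : eqF y y' -> eqv y y'.
Proof. by move=> h; exists fone; split => //; rewrite fmul1l. Qed.
Lemma eqv_sym y y' : eqv y y' -> eqv y' y.
Proof.
move=> [eps [he h]]; exists (finv eps); split => //.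
have := eqF_mul (finv eps) h; rewrite fmulA fmul_inv // fmul1l; exact: eqF_sym.
Qed.
Lemma eqv_trans y1 y2 y3 : eqv y1 y2 -> eqv y2 y3 -> eqv y1 y3.
Proof.
move=> [e1 [he1 h1]] [e2 [he2 h2]]; exists (fmul e1 e2); split; first by apply/isunit_mul.
apply: eqF_trans h1 _; rewrite -fmulA; exact: eqF_mul.
Qed.
Lemma eqv_mul x y y' : eqv y y' -> eqv (fmul x y) (fmul x y').
Proof.
move=> [eps [he h]]; exists eps; split => //; rewrite fmulCA; exact: eqF_mul.
Qed.
Lemma eqv_mulr x y y' : eqv y y' -> eqv (fmul y x) (fmul y' x).
Proof. by rewrite !(fmulC _ x); apply: eqv_mul. Qed.

Lemma reps0 (s : seq (FF -> Prop)) : exists sl : seq FF,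
  forall y, List.In (clsF y) s -> exists y', List.In y' sl /\ eqF y y'.
Proof.
elim: s => [|c s [sl hsl]]; first by exists [::].
case: (classic (exists y0, c = clsF y0)) => [[y0 ->]|hno].
- exists (y0 :: sl) => y [e1|hin].
  + by exists y0; split; [left | apply: clsF_eqE].
  + have [y' [h1 h2]] := hsl y hin; by exists y'; split; [right|].
- exists sl => y [e1|hin]; [by case: hno; exists y | exact: hsl].
Qed.

Lemma reps1 (sl : seq FF) : exists L : seq FF,
  (forall i, (i < size L)%N -> inCk (nth fone L i)) /\
  (forall y, List.In y sl -> inCk y -> exists2 i, (i < size L)%N & eqv (nth fone L i) y) /\
  (forall i j, (i < size L)%N -> (j < size L)%N -> eqv (nth fone L i) (nth fone L j) -> i = j).
Proof.
elim: sl => [|y sl [L [h1 [h2 h3]]]]; first by exists [::].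
case: (classic (inCk y /\ ~ exists2 i, (i < size L)%N & eqv (nth fone L i) y)) => [[hy hno]|hc].
- exists (y :: L); split; [|split].
  + by case=> [|i] //= hi; apply: h1.
  + move=> y' [<-|hin] hy'; first by exists 0%N => //; apply: eqv_refl.
    have [i hi e1] := h2 y' hin hy'; by exists i.+1.
  + case=> [|i] [|j] //= hi hj e1.
    * by case: hno; exists j => //; apply: eqv_sym.
    * by case: hno; exists i.
    * by rewrite (h3 i j).
- exists L; split; [exact: h1 | split => //].
  move=> y' [<-|hin] hy'; last exact: h2.
  apply: NNPP => hn; apply: hc; split => // - [i hi e1]; apply: hn; by exists i.
Qed.

Lemma reps : exists L : seq FF,
  (forall i, (i < size L)%N -> inCk (nth fone L i)) /\
  (forall y, inCk y -> exists2 i, (i < size L)%N & eqv (nth fone L i) y) /\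
  (forall i j, (i < size L)%N -> (j < size L)%N -> eqv (nth fone L i) (nth fone L j) -> i = j).
Proof.
have [s hs] := fin_cls; have [sl hsl] := reps0 s; have [L [h1 [h2 h3]]] := reps1 sl.
exists L; split => //; split => // y hy.
have [y' [hin e1]] := hsl y (hs y).
have [i hi e2] := h2 y' hin (inCk_eq e1 hy).
exists i => //; exact: eqv_trans e2 (eqv_sym (eqv_of e1)).
Qed.

Section Reps.
Variable L : seq FF.
Hypothesis hL1 : forall i, (i < size L)%N -> inCk (nth fone L i).
Hypothesis hL2 : forall y, inCk y -> exists2 i, (i < size L)%N & eqv (nth fone L i) y.
Hypothesis hL3 : forall i j, (i < size L)%N -> (j < size L)%N ->
  eqv (nth fone L i) (nth fone L j) -> i = j.

Local Notation N := (size L).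
Lemma N_gt0 : (0 < N)%N.
Proof. have [i hi _] := hL2 inCk_r; exact: leq_ltn_trans hi. Qed.
Definition i0 : 'I_N := Ordinal N_gt0.
Definition Lf (i : 'I_N) := nth fone L i.
Lemma inCk_L i : inCk (Lf i). Proof. exact: hL1. Qed.

Definition psi_el y : 'I_N := odflt i0 [pick i : 'I_N | asb (eqv (Lf i) y)].

Lemma psi_spec y : inCk y -> eqv (Lf (psi_el y)) y.
Proof.
move=> hy; rewrite /psi_el; case: pickP => [i /asbP //|hn].
have [i hi e1] := hL2 hy; have := hn (Ordinal hi); by move/asbP.
Qed.

Lemma psi_uniq i y : inCk y -> eqv (Lf i) y -> psi_el y = i.
Proof.
move=> hy e1; apply: val_inj; apply: hL3; [exact: ltn_ord | exact: ltn_ord |].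
exact: eqv_trans (psi_spec hy) (eqv_sym e1).
Qed.

Lemma psi_eqv y y' : inCk y -> inCk y' -> eqv y y' -> psi_el y = psi_el y'.
Proof. move=> hy hy' e1; apply: psi_uniq; [exact: hy | exact: eqv_trans (psi_spec hy') (eqv_sym e1)]. Qed.

Lemma psi_L i : psi_el (Lf i) = i.
Proof. apply: psi_uniq; [exact: inCk_L | exact: eqv_refl]. Qed.

Lemma psi_mul a b : inCk a -> inCk b ->
  psi_el (fmul (Lf (psi_el a)) (Lf (psi_el b))) = psi_el (fmul a b).
Proof.
move=> ha hb; apply: psi_eqv; try (apply: inCk_mul; exact: inCk_L).
- exact: inCk_mul.
apply: eqv_trans (eqv_mulr _ (psi_spec ha)) (eqv_mul _ (psi_spec hb)).
Qed.

Definition zr := psi_el r.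
Definition ad (i j : 'I_N) := psi_el (fmul (Lf i) (Lf j)).
Definition op (i : 'I_N) := odflt i0 [pick j : 'I_N | asb (eqv (fmul (Lf i) (Lf j)) r)].

Lemma psi_mull a b : inCk a -> inCk b ->
  psi_el (fmul (Lf (psi_el a)) b) = psi_el (fmul a b).
Proof.
move=> ha hb; apply: psi_eqv; [apply: inCk_mul => //; exact: inCk_L | exact: inCk_mul |].
exact: eqv_mulr (psi_spec ha).
Qed.
Lemma psi_mulr a b : inCk a -> inCk b ->
  psi_el (fmul a (Lf (psi_el b))) = psi_el (fmul a b).
Proof. by move=> ha hb; rewrite fmulC psi_mull // fmulC. Qed.

Lemma adA : associative ad.
Proof.
move=> i j l; rewrite /ad.
have h := inCk_L; have hm : forall a b, inCk (fmul (Lf a) (Lf b)) by move=> a b; exact: inCk_mul.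
by rewrite psi_mull // psi_mulr // fmulA.
Qed.

Lemma adC : commutative ad.
Proof. by move=> i j; rewrite /ad fmulC. Qed.

Lemma ad0 : left_id zr ad.
Proof.
move=> i; rewrite /ad /zr.
have h := inCk_L i.
rewrite psi_mull //; last exact: inCk_r.
rewrite -{2}(psi_L i); apply: psi_eqv; [apply: inCk_mul => //; exact: inCk_r | exact: h|].
apply: eqv_of; rewrite fmulC; exact: h.1.
Qed.

Lemma adN : left_inverse zr op ad.
Proof.
move=> i; rewrite /op; case: pickP => [j /asbP hj|hn].
- rewrite /= adC /ad /zr; apply: psi_eqv => //; [apply: inCk_mul; exact: inCk_L | exact: inCk_r].
exfalso; have [_ [z hz]] := inCk_L i.
have izr : inCk (fmul z r).
  split; first by rewrite -fmulA; apply: eqF_mul; exact: rr.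
  exists (Lf i); rewrite fmulC fmulA; apply: eqF_trans (eqF_mulr _ hz) rr.
have := hn (psi_el (fmul z r)); move/asbP; apply.
apply: eqv_trans (eqv_mul _ (psi_spec izr)) _; rewrite fmulA; apply: eqv_of.
exact: eqF_trans (eqF_mulr _ hz) rr.
Qed.

Definition D : fgrp := @FGrp N zr op ad adA adC ad0 adN.
Definition Gz : finZmodType := gT D.
Local Notation G := Gz.

Definition psiP (c : FF -> Prop) : G := odflt i0 [pick i : 'I_N | asb (exists y, c y /\ eqv (Lf i) y)].

Lemma psiP_cls y : inCk y -> psiP (clsF y) = psi_el y.
Proof.
move=> hy; rewrite /psiP; case: pickP => [i /asbP [y' [[_ h1] h2]]|hn].
- apply: esym; apply: psi_uniq => //; apply: eqv_trans h2 (eqv_sym (eqv_of h1)).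
- exfalso; have := hn (psi_el y); move/asbP; apply; exists y; split; last exact: psi_spec.
  split => //; exact: eqF_refl.
Qed.

Lemma Cks_rep x : Cks H e k x -> exists a, x = clsF a /\ inCk a.
Proof.
rewrite Cks_Ck => hx; have [[a [_ ea]] _] := hx; subst x; exists a; split => //.
exact/Ck_iff.
Qed.

Definition cnt (s : seq P) : {ffun G -> nat} :=
  [ffun g => count (fun p => psi_el (pr p) == g) s].
Definition theta (u : FF) := cnt (enum_mset u.2).

Lemma cnt_perm (s s' : seq P) : perm_eq s s' -> cnt s = cnt s'.
Proof. by move/permP => h; apply/ffunP => g; rewrite !ffunE h. Qed.
Lemma cnt_cat (s s' : seq P) : cnt (s ++ s') = seqD (cnt s) (cnt s').
Proof. by apply/ffunP => g; rewrite !ffunE count_cat. Qed.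
Lemma cnt_nil : cnt [::] = seq0 G.
Proof. by apply/ffunP => g; rewrite !ffunE. Qed.

Lemma enum_msetD (A B : {mset P}) : perm_eq (enum_mset (A `+` B)) (enum_mset A ++ enum_mset B).
Proof. by apply/allP => a _ /=; rewrite count_cat !count_mem_mset msetE2. Qed.

Lemma theta_mul u v : theta (fmul u v) = seqD (theta u) (theta v).
Proof. by rewrite /theta -cnt_cat; apply: cnt_perm; apply: enum_msetD. Qed.

Lemma theta_one : theta fone = seq0 G.
Proof. by rewrite /theta /= enum_mset0 cnt_nil. Qed.

Lemma theta_seq (v : V) (s : seq P) : theta (v, seq_mset s) = cnt s.
Proof. by apply: cnt_perm; apply: perm_eq_seq_mset. Qed.

Lemma sum_cnt (s : seq P) : (\sum_(g : G) g *+ cnt s g)%R = (\sum_(p <- s) (psi_el (pr p) : G))%R.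
Proof.
elim: s => [|a s IH]; first by rewrite big_nil; apply: big1 => g _; rewrite ffunE.
rewrite big_cons -IH.
under eq_bigr => g _ do rewrite ffunE /= mulrnDr.
rewrite big_split /=; congr (_ + _)%R; last by apply: eq_bigr => g _; rewrite ffunE.
rewrite (bigD1 (psi_el (pr a))) //= eqxx big1 ?addr0 // => g hg.
by rewrite eq_sym (negbTE hg).
Qed.

Lemma psi_prod (s : seq P) : s <> [::] -> (forall p, p \in s -> inCk (pr p)) ->
  psi_el (0%R, seq_mset s) = (\sum_(p <- s) (psi_el (pr p) : G))%R.
Proof.
elim: s => [|a s IH] // _ hs.
have ha : inCk (pr a) by apply: hs; rewrite inE eqxx.
have -> : ((0%R : V), seq_mset (a :: s)) = fmul (pr a) (0%R, seq_mset s).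
  by rewrite mset_cons /fmul /= add0r.
case: s IH hs => [|b s] IH hs.
- by rewrite seq_mset_nil fmul1 big_cons big_nil addr0.
- have hs' : forall p, p \in b :: s -> inCk (pr p) by move=> p hp; apply: hs; rewrite inE hp orbT.
  have ibs : inCk (0%R, seq_mset (b :: s)) by apply: L1_seq.
  rewrite big_cons -IH // gaddE /= /ad psi_mul //.
Qed.

Lemma Fk_seq (v : V) (s : seq P) : (forall p, p \in s -> Pk H e k p) -> Fk (v, seq_mset s).
Proof.
move=> hs p /=; rewrite mset_seqE -has_count has_pred1 => hp; exact: hs.
Qed.

Lemma enum_Pk u p : Fk u -> p \in enum_mset u.2 -> Pk H e k p.
Proof. move=> hu hp; apply: hu; have : p \in u.2 by []; by rewrite in_mset. Qed.

Lemma seq_mset_eq0 (s : seq P) : seq_mset s = mset0 -> s = [::].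
Proof.
move=> h; have := perm_size (perm_eq_seq_mset s); rewrite h enum_mset0.
by case: s {h}.
Qed.




Lemma psi_u u : Hk u -> ~ isunit u -> psi_el (0%R, u.2) = zr.
Proof.
move=> [hF hH] hu.
have -> : ((0%R : V), u.2) = fmul (finv u) u by apply: FFeq; rewrite /= ?addNr ?mset0D.
have iu := L1 hF hu.
rewrite /zr; apply: psi_eqv; [exact: inCk_unit | exact: inCk_r |].
exists (finv u); split => //; apply: eqF_mul; exact: T.
Qed.

Lemma mem_enum_Pk u p : Fk u -> p \in enum_mset u.2 -> inCk (pr p).
Proof. by move=> hu hp; apply/Pk_iff; exact: enum_Pk hp. Qed.

Lemma zs_theta u : Hk u -> zero_sum (theta u).
Proof.
move=> hu; rewrite /zero_sum /theta sum_cnt.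
case hs : (enum_mset u.2) => [|a s]; first by rewrite big_nil.
rewrite -hs -psi_prod; last first.
- move=> p hp; exact: mem_enum_Pk hu.1 hp.
- by rewrite hs.
rewrite seq_mset_id psi_u //.
move=> hun; move: hs; by rewrite hun enum_mset0.
Qed.

Lemma pg_ex : forall g : G, exists p, inCk (pr p) /\ psi_el (pr p) = g.
Proof.
move=> g; have [p hp] := prime_in (Lf g).
have ip := inCk_eq hp (inCk_L g).
exists p; split => //; rewrite -(psi_eqv (inCk_L g) ip (eqv_of hp)); exact: psi_L.
Qed.

Lemma eqv_of_psi y y' : inCk y -> inCk y' -> psi_el y = psi_el y' -> eqv y y'.
Proof.
move=> hy hy' e1; apply: eqv_trans (eqv_sym (psi_spec hy)) _; rewrite e1; exact: psi_spec.
Qed.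

Lemma adjust (v : V) (s : seq P) : s <> [::] -> (forall p, p \in s -> inCk (pr p)) ->
  (\sum_(g : G) g *+ cnt s g)%R = 0%R ->
  exists u, Hk u /\ u.2 = seq_mset s.
Proof.
move=> hs hin hz.
have Fu' : Fk ((0%R : V), seq_mset s) by apply: Fk_seq => p hp; apply/Pk_iff; exact: hin.
have iu' : inCk ((0%R : V), seq_mset s) by apply: L1_seq.
have e1 : psi_el ((0%R : V), seq_mset s) = psi_el r by rewrite psi_prod // -sum_cnt hz.
have [eps [he h]] := eqv_of_psi iu' inCk_r e1.
exists (fmul (finv eps) (0%R, seq_mset s)); split; last by rewrite /= mset0D.
split; first by apply: FkM => //; exact: Fsub_unit.
apply: eqF_H hr; apply: eqF_sym; apply: eqF_trans (eqF_mul _ h) _.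
rewrite fmulA fmul_inv // fmul1l; exact: eqF_refl.
Qed.

Lemma T1_surj b : zero_sum b -> exists u, Hk u /\ theta u = b.
Proof.
move=> hb; have [f hf] := fin_all_exists pg_ex.
pose s := flatten [seq nseq (b g) (f g) | g <- index_enum G].
have hcnt : cnt s = b.
  apply/ffunP => g'; rewrite ffunE count_flatten -map_comp.
  under eq_map => g do rewrite /= count_nseq (proj2 (hf g)).
  rewrite sumn_map /= (bigD1 g') //= eqxx mul1n big1 ?addn0 // => g hg.
  by rewrite (negbTE hg).
have hin : forall p, p \in s -> inCk (pr p).
  move=> p /flattenP [t /mapP [g _ ->]] /nseqP [-> _]; exact: (proj1 (hf g)).
case hs0 : s => [|a s'].
- exists fone; split; first by split; [exact: Fk1 | exact: H1].
  by rewrite theta_one -hcnt hs0 cnt_nil.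
- have hne : s <> [::] by rewrite hs0.
  have hz : (\sum_(g : G) g *+ cnt s g)%R = 0%R by move: hb; rewrite /zero_sum -hcnt.
  have [u [hu eu]] := adjust 0%R hne hin hz.
  by exists u; split => //; rewrite /theta eu -hcnt; apply: cnt_perm; apply: perm_eq_seq_mset.
Qed.

Lemma theta_unit u : Hk u -> (theta u = seq0 G <-> unitIn Hk u).
Proof.
move=> hu; split.
- move=> ht; have he : enum_mset u.2 = [::].
    case hs : (enum_mset u.2) => [|a s] //; exfalso.
    have := f_equal (fun f : {ffun G -> nat} => f (psi_el (pr a))) ht.
    by rewrite /theta hs !ffunE /= eqxx.
  have hun : isunit u by rewrite /isunit -(seq_mset_id u.2) he seq_mset_nil.
  case: part_a => _ [hU _]; apply/(hU u hu); split; first exact: hu.1.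
  exists (finv u); split; first exact: Fsub_unit.
  by rewrite fmulC fmul_inv.
- move=> hU; case: part_a => _ [hU' _]; have := (hU' u hu).1 hU => [[_ [v [_ ev]]]].
  have h0 : isunit (fmul u v) by rewrite ev.
  have hun : isunit u by case/isunit_mul: h0.
  by rewrite /theta hun enum_mset0 cnt_nil.
Qed.

Lemma split_cnt (s : seq P) : forall b c, cnt s = seqD b c ->
  exists s1 s2, perm_eq s (s1 ++ s2) /\ cnt s1 = b /\ cnt s2 = c.
Proof.
elim: s => [|a s IH] b c h.
- exists [::], [::]; split => //.
  have hb : forall g, b g = 0%N /\ c g = 0%N.
    move=> g; have := f_equal (fun f : {ffun G -> nat} => f g) h; rewrite !ffunE /=; lia.
  by split; apply/ffunP => g; rewrite !ffunE; have [] := hb g.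
- set g0 := psi_el (pr a).
  have hg : forall g, ((g0 == g) + count (fun p => psi_el (pr p) == g) s = b g + c g)%N.
    by move=> g; have := f_equal (fun f : {ffun G -> nat} => f g) h; rewrite !ffunE.
  case: (posnP (b g0)) => hb0.
  + pose c' := [ffun g => (c g - (g0 == g))%N].
    have [s1 [s2 [hp [h1 h2]]]] : exists s1 s2, perm_eq s (s1 ++ s2) /\ cnt s1 = b /\ cnt s2 = c'.
      apply: IH; apply/ffunP => g; rewrite !ffunE; have := hg g.
      by case: (eqVneq g0 g) => [<-|]; rewrite /= ?hb0 /nat_of_bool; lia.
    exists s1, (a :: s2); split; [|split => //].
    * apply/permP => q; move/permP: hp => hp; rewrite /= hp !count_cat /=; lia.
    * apply/ffunP => g; have := f_equal (fun f : {ffun G -> nat} => f g) h2.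
      have := hg g; rewrite !ffunE /=.
      case: (eqVneq g0 g) => [<-|hne] /= e1 e2; rewrite e2.
      - by rewrite hb0 add0n in e1; rewrite -e1 addKn.
      - by rewrite subn0.
  + pose b' := [ffun g => (b g - (g0 == g))%N].
    have [s1 [s2 [hp [h1 h2]]]] : exists s1 s2, perm_eq s (s1 ++ s2) /\ cnt s1 = b' /\ cnt s2 = c.
      apply: IH; apply/ffunP => g; rewrite !ffunE; have := hg g.
      case: (eqVneq g0 g) => [<-|hne] /= e1; rewrite /nat_of_bool;
      move: hb0 e1; [move: (b g0) (c g0) => B C | move: (b g) (c g) => B C]; lia.
    exists (a :: s1), s2; split; [|split => //].
    * by rewrite /= perm_cons.
    * apply/ffunP => g; have := f_equal (fun f : {ffun G -> nat} => f g) h1.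
      have := hg g; rewrite !ffunE /=.
      case: (eqVneq g0 g) => [<-|hne] /= e1 e2; rewrite e2.
      - by rewrite add1n subn1 prednK.
      - by rewrite subn0.
Qed.

Lemma T2_split u b c : Hk u -> zero_sum b -> zero_sum c -> theta u = seqD b c ->
  exists v w, Hk v /\ Hk w /\ u = fmul v w /\ theta v = b /\ theta w = c.
Proof.
move=> hu hb hc ht; have [s1 [s2 [hp [h1 h2]]]] := split_cnt ht.
have hu2 : u.2 = seq_mset s1 `+` seq_mset s2.
  apply/msetP => p; rewrite msetE2 !mset_seqE -count_cat.
  by rewrite -(permP hp) count_mem_mset.
have hin : forall p, p \in s1 ++ s2 -> inCk (pr p).
  by move=> p hp'; apply: (mem_enum_Pk hu.1); rewrite (perm_mem hp).
have Hk1 : Hk fone by split; [exact: Fk1 | exact: H1].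
case hs1 : s1 => [|a1 s1'].
  exists fone, u; split => //; split => //; split; first by rewrite fmul1l.
  split; first by rewrite theta_one -h1 hs1 cnt_nil.
  by rewrite ht -h1 hs1 cnt_nil; apply/ffunP => g; rewrite !ffunE.
case hs2 : s2 => [|a2 s2'].
  exists u, fone; split => //; split => //; split; first by rewrite fmul1.
  split; last by rewrite theta_one -h2 hs2 cnt_nil.
  by rewrite ht -h2 hs2 cnt_nil; apply/ffunP => g; rewrite !ffunE addn0.
have hne : s1 <> [::] by rewrite hs1.
have hin1 : forall p, p \in s1 -> inCk (pr p) by move=> p hp1; apply: hin; rewrite mem_cat hp1.
have hz : (\sum_(g : G) g *+ cnt s1 g)%R = 0%R by move: hb; rewrite /zero_sum -h1.
have [v [hv ev]] := adjust 0%R hne hin1 hz.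
pose w : FF := ((u.1 - v.1)%R, seq_mset s2).
have euvw : u = fmul v w.
  apply: FFeq; first by rewrite /= addrC subrK.
  by rewrite /= ev hu2.
have Fw : Fk w by apply: Fk_seq => p hp1; apply/Pk_iff; apply: hin; rewrite mem_cat hp1 orbT.
have nw : ~ isunit w by move=> /seq_mset_eq0; rewrite hs2.
have iw := L1 Fw nw.
have evr : eqF v r.
  apply: T; first exact: hv.2.
  apply: L1; first exact: hv.1.
  by rewrite /isunit ev => /seq_mset_eq0; rewrite hs1.
exists v, w; split => //; split; last split => //.
- split => //; apply: eqF_H hu.2; apply: eqF_sym.
  apply: eqF_trans (eqF_sym iw.1) _; apply: eqF_trans (eqF_mul w (eqF_sym evr)) _.
  rewrite euvw fmulC; exact: eqF_refl.
- by split; [rewrite /theta ev -h1 | rewrite /theta /= -h2]; apply: cnt_perm; apply: perm_eq_seq_mset.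
Qed.

Lemma part2_reps : exists (G : finZmodType) (psi : (FF -> Prop) -> G),
  (forall g : G, exists x, Cks H e k x /\ psi x = g) /\
  (forall x y, Cks H e k x -> Cks H e k y -> psi (cadd Fa H x y) = (psi x + psi y)%R) /\
  (forall x, Cks H e k x ->
     (psi x = 0%R <-> exists c, classes_units Fa H c /\ x = phik H e k c)) /\
  exists theta : FF -> {ffun G -> nat}, transfer_hom Hk theta.
Proof.
exists G, psiP; split; [|split; [|split]].
- move=> g; exists (clsF (Lf g)); split; first by rewrite Cks_Ck; apply/Ck_iff; exact: inCk_L.
  by rewrite psiP_cls ?psi_L //; exact: inCk_L.
- move=> x y /Cks_rep [a [-> ha]] /Cks_rep [b [-> hb]].
  rewrite caddF !psiP_cls //; last exact: inCk_mul.
  by rewrite gaddE /= /ad psi_mul.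
- move=> x /Cks_rep [a [-> ha]]; rewrite psiP_cls // gzeroE /=; split.
  + move=> e1; have [eps [he h]] := eqv_of_psi ha inCk_r e1.
    exists (clsF eps); split; first by exists eps; split => //; apply/unitFallP.
    by rewrite /phik hek caddF; apply: clsF_eq.
  + case=> c [[eps [he ->]]]; rewrite /phik hek caddF => ea.
    apply: psi_eqv => //; first exact: inCk_r.
    exists eps; split; first by apply/unitFallP.
    exact: clsF_eqE ea.
- exists theta; split; [exact: zs_theta|split; [exact: theta_one|split]].
  + by move=> u v _ _; apply: theta_mul.
  + split; [exact: T1_surj | split; [exact: theta_unit|]].
    move=> u b c hu hb hc ht; exact: T2_split.
Qed.
End Reps.
End WithHr2.
End Main.

Lemma ek_prime (V : zmodType) (P : choiceType) (H : FF V P -> Prop) c :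
  (forall c, red_classes (Fall V P) H c -> exists p, c (prime_el V p)) ->
  red_classes (Fall V P) H c -> exists p, c = cls (Fall V P) H (prime_el V p).
Proof.
move=> hpr hc; have [p hp] := hpr c hc; exists p.
case: hc hp => y [_ ->] [_ h]; exact: cls_eq.
Qed.

Theorem proposition4p1 (V : zmodType) (P : choiceType) (H : FF V P -> Prop)
    (n : nat) (e : nat -> FF V P -> Prop) :
  (* H is a seminormal C-monoid in F, dense in F *)
  C_monoid (Fall V P) H -> seminormal H -> dense H ->
  (* E(C) = E(C^* ) = {e_0, ..., e_n}, distinct, e_0 = [1], e_0 + ... + e_n = e_n *)
  e 0 = cls (Fall V P) H (fone V P) ->
  (forall i, (i <= n)%N ->
     red_classes (Fall V P) H (e i) /\ cadd (Fall V P) H (e i) (e i) = e i) ->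
  (forall x, classes (Fall V P) H x -> cadd (Fall V P) H x x = x ->
     exists i, (i <= n)%N /\ x = e i) ->
  (forall i j, (i <= n)%N -> (j <= n)%N -> e i = e j -> i = j) ->
  csum (Fall V P) H e n = e n ->
  (* every class of C^* contains a prime *)
  (forall c, red_classes (Fall V P) H c -> exists p : P, c (prime_el V p)) ->
  (forall k, (k <= n)%N ->
    C_monoid (Fk H e k) (Hk H e k) /\ seminormal (Hk H e k) /\
    (* (1) *)
    (~ classes_H (Fall V P) H (e k) -> forall x, Hk H e k x <-> unitIn H x) /\
    (classes_H (Fall V P) H (e k) -> phik_injective H e k ->
       sg_iso (classes (Fk H e k) (Hk H e k)) (cadd (Fk H e k) (Hk H e k))
              (Ck H e k) (cadd (Fall V P) H)) /\
    (classes_H (Fall V P) H (e k) -> ~ phik_injective H e k ->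
       sg_iso (classes (Fk H e k) (Hk H e k)) (cadd (Fk H e k) (Hk H e k))
              (fun c => classes_units (Fall V P) H c \/ Ck H e k c)
              (cadd (Fall V P) H)) /\
    (sg_group (classes (Fk H e k) (Hk H e k)) (cadd (Fk H e k) (Hk H e k)) ->
       Krull (Hk H e k)) /\
    (* (2): G is (isomorphic to) C_k^* / phi_k(C_{F^x}(H,F)) *)
    (classes_H (Fall V P) H (e k) ->
       exists (G : finZmodType) (psi : (FF V P -> Prop) -> G),
         (forall g : G, exists x, Cks H e k x /\ psi x = g) /\
         (forall x y, Cks H e k x -> Cks H e k y ->
            psi (cadd (Fall V P) H x y) = (psi x + psi y)%R) /\
         (forall x, Cks H e k x ->
            (psi x = 0%R <-> exists c, classes_units (Fall V P) H c /\ x = phik H e k c)) /\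
         exists theta : FF V P -> {ffun G -> nat}, transfer_hom (Hk H e k) theta)) /\
  (* in particular C(H_0, F_0) ~= C_0 *)
  sg_iso (classes (Fk H e 0) (Hk H e 0)) (cadd (Fk H e 0) (Hk H e 0))
         (Ck H e 0) (cadd (Fall V P) H).
Proof.
move=> hCm hsn _ he0 hE _ _ _ hpr.
have main : forall k, (k <= n)%N ->
    C_monoid (Fk H e k) (Hk H e k) /\ seminormal (Hk H e k) /\
    (~ classes_H (Fall V P) H (e k) -> forall x, Hk H e k x <-> unitIn H x) /\
    (classes_H (Fall V P) H (e k) -> phik_injective H e k ->
       sg_iso (classes (Fk H e k) (Hk H e k)) (cadd (Fk H e k) (Hk H e k))
              (Ck H e k) (cadd (Fall V P) H)) /\
    (classes_H (Fall V P) H (e k) -> ~ phik_injective H e k ->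
       sg_iso (classes (Fk H e k) (Hk H e k)) (cadd (Fk H e k) (Hk H e k))
              (fun c => classes_units (Fall V P) H c \/ Ck H e k c)
              (cadd (Fall V P) H)) /\
    (sg_group (classes (Fk H e k) (Hk H e k)) (cadd (Fk H e k) (Hk H e k)) ->
       Krull (Hk H e k)) /\
    (classes_H (Fall V P) H (e k) ->
       exists (G : finZmodType) (psi : (FF V P -> Prop) -> G),
         (forall g : G, exists x, Cks H e k x /\ psi x = g) /\
         (forall x y, Cks H e k x -> Cks H e k y ->
            psi (cadd (Fall V P) H x y) = (psi x + psi y)%R) /\
         (forall x, Cks H e k x ->
            (psi x = 0%R <-> exists c, classes_units (Fall V P) H c /\ x = phik H e k c)) /\
         exists theta : FF V P -> {ffun G -> nat}, transfer_hom (Hk H e k) theta).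
  move=> k hk; have [hred hidem] := hE k hk.
  have [pk hek] := ek_prime hpr hred.
  have hrH : classes_H (Fall V P) H (e k) -> H (prime_el V pk).
    move=> [y [hy ey]]; move: (Hr_of hek hy ey); by [].
  split; first by apply: (part_a e hCm hpr k).
  split; first by apply: (@part_b V P H e k hsn).
  split; first by apply: (part_c hCm hpr hek hidem).
  split; first by move=> hc hinj; apply: (part_d hCm hpr hek hidem (hrH hc) hinj).
  split; first by move=> hc hninj; apply: (part_e hCm hpr hek hidem (hrH hc) hninj).
  split; first by move=> hg; apply: (part_f hCm hpr hek hidem hg).
  move=> hc; have [L [h1 [h2 h3]]] := reps hCm hpr pk.
  by apply: (part2_reps hCm hpr hek hidem (hrH hc) h1 h2 h3).
split; first exact: main.
have [_ [_ [_ [hd _]]]] := main 0%N (leq0n n).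
apply: hd.
- exists (fone V P); split; [exact: H1 | exact: he0].
- move=> c1 c2 [a [_ ->]] [b [_ ->]]; rewrite /phik he0 !cadd_cls // !fmul1 //.
Qed.
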